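(* Let $\mathcal{D}$ be a planar disk, regarded as a domain of $\mathbb{C}_{-1}$ with split-complex coordinate $z$, and let $A:\mathcal{D}\to\mathbb{C}_{-1}$ be a split-holomorphic function with $A_z=H^2$ for some split-holomorphic function $H:\mathcal{D}\to\mathbb{C}_{-1}$. If $z_0\in\mathcal{D}$ is an isolated zero of $H$, then the indefinite improper affine map $$\psi=-\tfrac12\,\mathrm{Im}\!\int(\Phi+\overline\Phi)\times d\Phi,\qquad \Phi(z)=(jz,\,A(z),\,1),$$ is well defined on $\mathcal{D}^*=\mathcal{D}\setminus\{z_0\}$ and has a non-removable isolated singularity at $z_0$.
   Context: $\mathbb{C}_{-1}=\{s+jt: s,t\in\mathbb{R}\}$ with $j^2=1$ (split-complex numbers), conjugation $\overline{s+jt}=s-jt$, $\mathrm{Im}(s+jt)=t$; split-holomorphic functions are those satisfying the split-complex Cauchy–Riemann equations, i.e. depending only on $z=s+jt$, with derivative $A_z$. Operations on $\mathbb{C}_{-1}^3$-valued curves ($\times$ = cross product, conjugation, $\mathrm{Im}$) are taken componentwise. An indefinite improper affine map is a surface locally given as the graph of a solution of $u_{xx}u_{yy}-u_{xy}^2=-1$ (affine normal $(0,0,1)$), allowed to have singular points where the affine metric degenerates but the affine conormal is well defined; $\Phi=N+j\,\xi\times\psi$ with $N$ the affine conormal. A non-removable isolated singularity at $z_0$ means $\psi$ does not extend to $z_0$ as a regular improper affine sphere (locally a graph of a $C^2$ solution of the Hessian equation). *)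

(* Defs.v *)
From Stdlib Require Import Reals.
Open Scope R_scope.

(** * Split-complex numbers  C_{-1} = { s + j t }, j^2 = 1,
    represented as pairs (s, t). *)
Definition SC := (R * R)%type.
Definition sc_add (a b : SC) : SC := (fst a + fst b, snd a + snd b).
(* (s1 + j t1)(s2 + j t2) = s1 s2 + t1 t2 + j (s1 t2 + t1 s2) since j^2 = 1 *)
Definition sc_mul (a b : SC) : SC :=
  (fst a * fst b + snd a * snd b, fst a * snd b + snd a * fst b).
Definition sc_conj (a : SC) : SC := (fst a, - snd a).
Definition sc_Im (a : SC) : R := snd a.
Definition sc_j : SC := (0, 1).
Definition sc_of_R (x : R) : SC := (x, 0).
Definition sc_zero : SC := (0, 0).

Definition SC3 := (SC * SC * SC)%type.
Definition v1 (v : SC3) : SC := fst (fst v).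
Definition v2 (v : SC3) : SC := snd (fst v).
Definition v3 (v : SC3) : SC := snd v.
Definition sc3_add (x y : SC3) : SC3 :=
  (sc_add (v1 x) (v1 y), sc_add (v2 x) (v2 y), sc_add (v3 x) (v3 y)).
Definition sc3_conj (x : SC3) : SC3 := (sc_conj (v1 x), sc_conj (v2 x), sc_conj (v3 x)).
Definition sc3_scale (w : SC) (x : SC3) : SC3 :=
  (sc_mul (v1 x) w, sc_mul (v2 x) w, sc_mul (v3 x) w).
Definition sc_sub (a b : SC) : SC := (fst a - fst b, snd a - snd b).
Definition sc3_cross (x y : SC3) : SC3 :=
  (sc_sub (sc_mul (v2 x) (v3 y)) (sc_mul (v3 x) (v2 y)),
   sc_sub (sc_mul (v3 x) (v1 y)) (sc_mul (v1 x) (v3 y)),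
   sc_sub (sc_mul (v1 x) (v2 y)) (sc_mul (v2 x) (v1 y))).

Definition R3 := (R * R * R)%type.
Definition r1 (p : R3) : R := fst (fst p).
Definition r2 (p : R3) : R := snd (fst p).
Definition r3 (p : R3) : R := snd p.
Definition sc3_Im (x : SC3) : R3 := (sc_Im (v1 x), sc_Im (v2 x), sc_Im (v3 x)).
Definition r3_scale (c : R) (p : R3) : R3 := (c * r1 p, c * r2 p, c * r3 p).

Definition diff2 (f : R -> R -> R) (s t fs ft : R) : Prop :=
  forall eps, 0 < eps -> exists delta, 0 < delta /\
    forall h k, Rabs h < delta -> Rabs k < delta ->
      Rabs (f (s + h) (t + k) - f s t - fs * h - ft * k) <= eps * (Rabs h + Rabs k).

Definition cont2_at (f : R -> R -> R) (x y : R) : Prop :=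
  forall eps, 0 < eps -> exists delta, 0 < delta /\
    forall h k, Rabs h < delta -> Rabs k < delta -> Rabs (f (x + h) (y + k) - f x y) < eps.

Definition open2 (Om : R -> R -> Prop) : Prop :=
  forall x y, Om x y -> exists r, 0 < r /\
    forall h k, Rabs h < r -> Rabs k < r -> Om (x + h) (y + k).

(* F = u + j v satisfies the split Cauchy-Riemann equations u_s = v_t,
   u_t = v_s on D, and F' = u_s + j v_s is its derivative F_z. *)
Definition split_holo_deriv (D : SC -> Prop) (F F' : SC -> SC) : Prop :=
  forall z, D z ->
    diff2 (fun s t => fst (F (s, t))) (fst z) (snd z) (fst (F' z)) (snd (F' z)) /\
    diff2 (fun s t => snd (F (s, t))) (fst z) (snd z) (snd (F' z)) (fst (F' z)).

Definition split_holomorphic (D : SC -> Prop) (F : SC -> SC) : Prop :=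
  exists F', split_holo_deriv D F F'.

Definition in_disk (c : SC) (r : R) (z : SC) : Prop :=
  (fst z - fst c) ^ 2 + (snd z - snd c) ^ 2 < r ^ 2.

Definition isolated_zero (D : SC -> Prop) (H : SC -> SC) (z0 : SC) : Prop :=
  D z0 /\ H z0 = sc_zero /\
  exists r, 0 < r /\ forall z, D z -> in_disk z0 r z -> z <> z0 -> H z <> sc_zero.

Definition Phi (A : SC -> SC) (z : SC) : SC3 := (sc_mul sc_j z, A z, sc_of_R 1).
(* Phi_z(z) = (j, A_z(z), 0), where A' is the split derivative A_z of A *)
Definition Phi_z (A' : SC -> SC) (z : SC) : SC3 := (sc_j, A' z, sc_of_R 0).

(* The R^3-valued 1-form  omega = -1/2 Im ((Phi + conj Phi) x dPhi),
   dPhi = Phi_z dz, dz = ds + j dt.  omega_s / omega_t are its values on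
   d/ds and d/dt. *)
Definition omega_dir (A A' : SC -> SC) (w : SC) (z : SC) : R3 :=
  r3_scale (- / 2)
    (sc3_Im (sc3_cross (sc3_add (Phi A z) (sc3_conj (Phi A z)))
                       (sc3_scale w (Phi_z A' z)))).
Definition omega_s A A' z := omega_dir A A' (sc_of_R 1) z.
Definition omega_t A A' z := omega_dir A A' sc_j z.

(* psi is a primitive of omega on the domain U, i.e. psi = -1/2 Im int (Phi+conj Phi) x dPhi
   is a well-defined (single valued) map on U. *)
Definition is_psi (U : SC -> Prop) (A A' : SC -> SC) (psi : SC -> R3) : Prop :=
  forall z, U z ->
    diff2 (fun s t => r1 (psi (s, t))) (fst z) (snd z) (r1 (omega_s A A' z)) (r1 (omega_t A A' z)) /\
    diff2 (fun s t => r2 (psi (s, t))) (fst z) (snd z) (r2 (omega_s A A' z)) (r2 (omega_t A A' z)) /\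
    diff2 (fun s t => r3 (psi (s, t))) (fst z) (snd z) (r3 (omega_s A A' z)) (r3 (omega_t A A' z)).

(** * Regular improper affine spheres (graphs of C^2 solutions of
      u_xx u_yy - u_xy^2 = -1) *)
Definition hessian_solution (Om : R -> R -> Prop) (u : R -> R -> R) : Prop :=
  exists ux uy uxx uxy uyx uyy : R -> R -> R,
    forall x y, Om x y ->
      diff2 u x y (ux x y) (uy x y) /\
      diff2 ux x y (uxx x y) (uxy x y) /\
      diff2 uy x y (uyx x y) (uyy x y) /\
      cont2_at uxx x y /\ cont2_at uxy x y /\ cont2_at uyx x y /\ cont2_at uyy x y /\
      uxx x y * uyy x y - (uxy x y) ^ 2 = -1.

(* psi : U -> R^3 (U a domain punctured at z0) extends to z0 as a regular
   improper affine sphere: near z0, psi together with its limit value p0 at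
   z0 lies on the graph of a C^2 solution u of the Hessian equation over an
   open set Om containing the projection of p0. *)
Definition removable_at (U : SC -> Prop) (psi : SC -> R3) (z0 : SC) : Prop :=
  exists r (p0 : R3) (Om : R -> R -> Prop) (u : R -> R -> R),
    0 < r /\ open2 Om /\ hessian_solution Om u /\
    Om (r1 p0) (r2 p0) /\ r3 p0 = u (r1 p0) (r2 p0) /\
    (forall eps, 0 < eps -> exists delta, 0 < delta /\
       forall z, U z -> in_disk z0 delta z ->
         Rabs (r1 (psi z) - r1 p0) < eps /\ Rabs (r2 (psi z) - r2 p0) < eps /\
         Rabs (r3 (psi z) - r3 p0) < eps) /\
    (forall z, U z -> in_disk z0 r z ->
       Om (r1 (psi z)) (r2 (psi z)) /\ r3 (psi z) = u (r1 (psi z)) (r2 (psi z))).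

Definition nonremovable_singularity (U : SC -> Prop) (psi : SC -> R3) (z0 : SC) : Prop :=
  ~ removable_at U psi z0.

(* Main.v *)
Require Import Defs.
From Stdlib Require Import Reals Lra Psatz FunctionalExtensionality.
From Coquelicot Require Import Coquelicot.
Open Scope R_scope.

Lemma omega_vals A A' (z:SC) : r1 (omega_s A A' z) = snd (A' z) /\ r2 (omega_s A A' z) = -1 /\
  r3 (omega_s A A' z) = fst (A z) - snd z * snd (A' z) /\
  r1 (omega_t A A' z) = fst (A' z) /\ r2 (omega_t A A' z) = 0 /\ r3 (omega_t A A' z) = - snd z * fst (A' z).
Proof.
intros. unfold omega_s, omega_t, omega_dir, r1,r2,r3, r3_scale, sc3_Im, sc3_cross, sc3_add, sc3_conj, sc3_scale, Phi, Phi_z, v1,v2,v3, sc_sub, sc_mul, sc_add, sc_conj, sc_Im, sc_j, sc_of_R. simpl; unfold r1,r2,r3; simpl. repeat split; field.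
Qed.

Lemma diff2_eqv f s t fs ft fs' ft' : fs = fs' -> ft = ft' -> diff2 f s t fs ft -> diff2 f s t fs' ft'.
Proof. intros; subst; auto. Qed.

Lemma diff2_ext f g s t fs ft : (forall x y, f x y = g x y) -> diff2 f s t fs ft -> diff2 g s t fs ft.
Proof. intros E D eps He. destruct (D eps He) as [d [Hd Hk]]. exists d; split; auto.
intros. rewrite <- !E. auto. Qed.

Lemma diff2_plus f g s t fs ft gs gt : diff2 f s t fs ft -> diff2 g s t gs gt ->
  diff2 (fun x y => f x y + g x y) s t (fs+gs) (ft+gt).
Proof.
intros Df Dg eps He.
destruct (Df (eps/2)) as [d1 [H1 K1]]; [lra|].
destruct (Dg (eps/2)) as [d2 [H2 K2]]; [lra|].
exists (Rmin d1 d2); split; [apply Rmin_glb_lt; auto|].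
intros h k Hh Hk.
assert (Hh1: Rabs h < d1) by (eapply Rlt_le_trans; [exact Hh| apply Rmin_l]).
assert (Hh2: Rabs h < d2) by (eapply Rlt_le_trans; [exact Hh| apply Rmin_r]).
assert (Hk1: Rabs k < d1) by (eapply Rlt_le_trans; [exact Hk| apply Rmin_l]).
assert (Hk2: Rabs k < d2) by (eapply Rlt_le_trans; [exact Hk| apply Rmin_r]).
specialize (K1 h k Hh1 Hk1). specialize (K2 h k Hh2 Hk2).
replace (f (s + h) (t + k) + g (s + h) (t + k) - (f s t + g s t) - (fs + gs) * h - (ft + gt) * k)
  with ((f (s + h) (t + k) - f s t - fs * h - ft * k) + (g (s + h) (t + k) - g s t - gs * h - gt * k)) by ring.
eapply Rle_trans; [apply Rabs_triang|].
replace (eps * (Rabs h + Rabs k)) with (eps/2 * (Rabs h + Rabs k) + eps/2 * (Rabs h + Rabs k)) by field.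
lra.
Qed.

Lemma diff2_scal c f s t fs ft : diff2 f s t fs ft -> diff2 (fun x y => c * f x y) s t (c*fs) (c*ft).
Proof.
intros Df eps He.
destruct (Df (eps/(Rabs c + 1))) as [d [Hd K]].
{ apply Rdiv_lt_0_compat; auto. pose proof (Rabs_pos c); lra. }
exists d; split; auto. intros h k Hh Hk. specialize (K h k Hh Hk).
replace (c * f (s + h) (t + k) - c * f s t - c * fs * h - c * ft * k) with
  (c * (f (s + h) (t + k) - f s t - fs * h - ft * k)) by ring.
rewrite Rabs_mult. pose proof (Rabs_pos c). pose proof (Rabs_pos h). pose proof (Rabs_pos k).
pose proof (Rabs_pos (f (s + h) (t + k) - f s t - fs * h - ft * k)).
assert (Rabs c * Rabs (f (s + h) (t + k) - f s t - fs * h - ft * k) <= (Rabs c + 1) * (eps / (Rabs c + 1) * (Rabs h + Rabs k))) by nra.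
replace ((Rabs c + 1) * (eps / (Rabs c + 1) * (Rabs h + Rabs k))) with (eps * (Rabs h + Rabs k)) in H3 by (field; lra).
auto.
Qed.

Lemma diff2_lip f s t fs ft : diff2 f s t fs ft -> exists d, 0 < d /\
  forall h k, Rabs h < d -> Rabs k < d ->
   Rabs (f (s+h) (t+k) - f s t) <= (Rabs fs + Rabs ft + 1) * (Rabs h + Rabs k).
Proof.
intros Df. destruct (Df 1) as [d [Hd K]]; [lra|]. exists d; split; auto.
intros h k Hh Hk. specialize (K h k Hh Hk).
replace (f (s + h) (t + k) - f s t) with ((f (s + h) (t + k) - f s t - fs * h - ft * k) + (fs*h + ft*k)) by ring.
eapply Rle_trans; [apply Rabs_triang|].
eapply Rle_trans; [apply Rplus_le_compat; [exact K| apply Rabs_triang]|].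
rewrite !Rabs_mult. pose proof (Rabs_pos fs). pose proof (Rabs_pos ft). pose proof (Rabs_pos h). pose proof (Rabs_pos k).
nra.
Qed.

Lemma diff2_mult_negt f s t fs ft : diff2 f s t fs ft ->
  diff2 (fun x y => - y * f x y) s t (- t * fs) (- f s t - t * ft).
Proof.
intros Df eps He.
destruct (diff2_lip f s t fs ft Df) as [d0 [Hd0 K0]].
set (C := Rabs fs + Rabs ft + 1).
assert (HC : 0 < C) by (unfold C; pose proof (Rabs_pos fs); pose proof (Rabs_pos ft); lra).
destruct (Df (eps/(2*(Rabs t + 1)))) as [d1 [Hd1 K1]].
{ apply Rdiv_lt_0_compat; auto. pose proof (Rabs_pos t); lra. }
set (d := Rmin d0 (Rmin d1 (eps/(2*C)))).
assert (Hd : 0 < d). { unfold d. repeat apply Rmin_glb_lt; auto. apply Rdiv_lt_0_compat; lra. }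
exists d; split; auto. intros h k Hh Hk.
assert (d <= d0) by apply Rmin_l.
assert (d <= d1) by (eapply Rle_trans; [apply Rmin_r| apply Rmin_l]).
assert (d <= eps/(2*C)) by (eapply Rle_trans; [apply Rmin_r| apply Rmin_r]).
specialize (K0 h k ltac:(lra) ltac:(lra)). specialize (K1 h k ltac:(lra) ltac:(lra)).
fold C in K0.
replace (- (t + k) * f (s + h) (t + k) - - t * f s t - - t * fs * h - (- f s t - t * ft) * k)
  with ((- t) * (f (s + h) (t + k) - f s t - fs * h - ft * k) + (- k) * (f (s + h) (t + k) - f s t)) by ring.
eapply Rle_trans; [apply Rabs_triang|]. rewrite !Rabs_mult, !Rabs_Ropp.
pose proof (Rabs_pos t). pose proof (Rabs_pos h). pose proof (Rabs_pos k).
pose proof (Rabs_pos (f (s + h) (t + k) - f s t - fs * h - ft * k)).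
pose proof (Rabs_pos (f (s + h) (t + k) - f s t)).
assert (A1: Rabs t * Rabs (f (s + h) (t + k) - f s t - fs * h - ft * k) <= eps/2 * (Rabs h + Rabs k)).
{ apply Rle_trans with ((Rabs t + 1) * (eps / (2 * (Rabs t + 1)) * (Rabs h + Rabs k))).
  - nra.
  - right. field. lra. }
assert (A2: Rabs k * Rabs (f (s + h) (t + k) - f s t) <= eps/2 * (Rabs h + Rabs k)).
{ apply Rle_trans with (Rabs k * (C * (Rabs h + Rabs k))). nra.
  assert (Rabs k * C <= eps/2).
  { apply Rle_trans with (eps/(2*C) * C). nra. right; field; lra. }
  nra. }
lra.
Qed.

Lemma deriv_bound F x l : derivable_pt_lim F x l -> forall eps, 0 < eps -> exists d, 0 < d /\
  forall h, Rabs h < d -> Rabs (F (x+h) - F x - l*h) <= eps * Rabs h.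
Proof.
intros D eps He. destruct (D eps He) as [d Hd]. exists d; split; [apply cond_pos|].
intros h Hh. destruct (Req_dec h 0) as [->|Hn].
- replace (x+0) with x by ring. replace (F x - F x - l*0) with 0 by ring. rewrite Rabs_R0. pose proof (Rabs_pos 0); nra.
- specialize (Hd h Hn Hh).
  replace (F (x + h) - F x - l * h) with (h * ((F (x + h) - F x) / h - l)) by (field; auto).
  rewrite Rabs_mult. pose proof (Rabs_pos h). nra.
Qed.

Lemma derivable_ext f g x l : (forall y, f y = g y) -> derivable_pt_lim f x l -> derivable_pt_lim g x l.
Proof. intros E D. replace g with f; auto. apply functional_extensionality; auto. Qed.

Lemma derivable_ext_loc f g x l d : 0 < d -> (forall y, Rabs (y - x) < d -> f y = g y) ->
  derivable_pt_lim f x l -> derivable_pt_lim g x l.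
Proof.
intros Hd E D eps He. destruct (D eps He) as [d1 Hd1].
assert (Hm : 0 < Rmin d d1) by (apply Rmin_glb_lt; auto; apply cond_pos).
exists (mkposreal _ Hm). simpl. intros h Hn Hh.
rewrite <- (E x), <- (E (x+h)).
- apply Hd1; auto. eapply Rlt_le_trans; [exact Hh| apply Rmin_r].
- replace (x + h - x) with h by ring. eapply Rlt_le_trans; [exact Hh| apply Rmin_l].
- replace (x - x) with 0 by ring. rewrite Rabs_R0; auto.
Qed.

Lemma diff2_of_1d F a b s t l : derivable_pt_lim F (a*s+b*t) l ->
  diff2 (fun x y => F (a*x+b*y)) s t (l*a) (l*b).
Proof.
intros D eps He.
set (M := Rabs a + Rabs b + 1).
assert (HM : 0 < M) by (unfold M; pose proof (Rabs_pos a); pose proof (Rabs_pos b); lra).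
destruct (deriv_bound F _ l D (eps/M)) as [d [Hd K]]. { apply Rdiv_lt_0_compat; lra. }
exists (d/(2*M)); split. { apply Rdiv_lt_0_compat; lra. }
intros h k Hh Hk.
assert (Hm : Rabs (a*h+b*k) <= M * (Rabs h + Rabs k)).
{ eapply Rle_trans; [apply Rabs_triang|]. rewrite !Rabs_mult. unfold M.
  pose proof (Rabs_pos a). pose proof (Rabs_pos b). pose proof (Rabs_pos h). pose proof (Rabs_pos k). nra. }
assert (Hs : Rabs (a*h+b*k) < d).
{ eapply Rle_lt_trans; [exact Hm|].
  apply Rlt_le_trans with (M * (d/(2*M) + d/(2*M))). apply Rmult_lt_compat_l; lra.
  right; field; lra. }
specialize (K _ Hs).
replace (a * (s + h) + b * (t + k)) with (a*s+b*t + (a*h+b*k)) by ring.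
replace (F (a * s + b * t + (a * h + b * k)) - F (a * s + b * t) - l * a * h - l * b * k)
  with (F (a * s + b * t + (a * h + b * k)) - F (a * s + b * t) - l * (a * h + b * k)) by ring.
eapply Rle_trans; [exact K|].
apply Rle_trans with (eps / M * (M * (Rabs h + Rabs k))).
- apply Rmult_le_compat_l; auto. left; apply Rdiv_lt_0_compat; lra.
- right; field; lra.
Qed.

Lemma dir_deriv f X Y x0 y0 al be l fs ft : X = x0 + l*al -> Y = y0 + l*be -> diff2 f X Y fs ft ->
  derivable_pt_lim (fun m => f (x0 + m*al) (y0 + m*be)) l (fs*al+ft*be).
Proof.
intros HX HY D eps He.
set (M := Rabs al + Rabs be + 1).
assert (HM : 0 < M) by (unfold M; pose proof (Rabs_pos al); pose proof (Rabs_pos be); lra).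
destruct (D (eps/(2*M))) as [d [Hd K]]. { apply Rdiv_lt_0_compat; lra. }
assert (Hd' : 0 < d/M) by (apply Rdiv_lt_0_compat; lra).
exists (mkposreal _ Hd'). simpl. intros h Hn Hh.
assert (Ha : Rabs (h*al) < d).
{ rewrite Rabs_mult. apply Rle_lt_trans with (Rabs h * M).
  unfold M; pose proof (Rabs_pos h); pose proof (Rabs_pos al); pose proof (Rabs_pos be); nra.
  apply Rlt_le_trans with (d/M*M). apply Rmult_lt_compat_r; lra. right; field; lra. }
assert (Hb : Rabs (h*be) < d).
{ rewrite Rabs_mult. apply Rle_lt_trans with (Rabs h * M).
  unfold M; pose proof (Rabs_pos h); pose proof (Rabs_pos al); pose proof (Rabs_pos be); nra.
  apply Rlt_le_trans with (d/M*M). apply Rmult_lt_compat_r; lra. right; field; lra. }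
specialize (K _ _ Ha Hb).
replace (x0 + (l+h)*al) with (X + h*al) by (rewrite HX; ring).
replace (y0 + (l+h)*be) with (Y + h*be) by (rewrite HY; ring).
rewrite <- HX, <- HY.
replace ((f (X + h * al) (Y + h * be) - f X Y) / h - (fs * al + ft * be)) with
  ((f (X + h * al) (Y + h * be) - f X Y - fs * (h*al) - ft * (h*be)) / h) by (field; auto).
unfold Rdiv. rewrite Rabs_mult, Rabs_inv by auto.
assert (Hp : 0 < Rabs h) by (apply Rabs_pos_lt; auto).
apply Rmult_lt_reg_r with (Rabs h); auto.
rewrite Rmult_assoc, Rinv_l, Rmult_1_r by lra.
eapply Rle_lt_trans; [exact K|].
rewrite !Rabs_mult.
assert (Rabs h * Rabs al + Rabs h * Rabs be <= M * Rabs h).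
{ unfold M; pose proof (Rabs_pos h); pose proof (Rabs_pos al); pose proof (Rabs_pos be); nra. }
apply Rle_lt_trans with (eps * / (2 * M) * (M * Rabs h)).
- apply Rmult_le_compat_l; auto. left; apply Rmult_lt_0_compat; auto. apply Rinv_0_lt_compat; lra.
- replace (eps * / (2 * M) * (M * Rabs h)) with (eps * Rabs h / 2) by (field; lra). nra.
Qed.

Lemma side_bound (f f' : R -> R) t0 d e L : 0 < d -> 0 <= e ->
  (forall x, t0 < x < t0 + d -> derivable_pt_lim f x (f' x) /\ Rabs (f' x) <= e) ->
  (forall eta, 0 < eta -> exists dl, 0 < dl /\ forall x, t0 < x < t0 + dl -> Rabs (f x - L) < eta) ->
  forall x, t0 < x < t0 + d -> Rabs (f x - L) <= e * (x - t0).
Proof.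
intros Hd He Hder Hlim x Hx.
apply Rle_plus_epsilon. intros eta Heta.
destruct (Hlim eta Heta) as [dl [Hdl Kl]].
set (y := t0 + Rmin dl (x - t0) / 2).
assert (Hm : 0 < Rmin dl (x - t0)) by (apply Rmin_glb_lt; lra).
assert (Hm1 : Rmin dl (x - t0) <= dl) by apply Rmin_l.
assert (Hm2 : Rmin dl (x - t0) <= x - t0) by apply Rmin_r.
assert (Hy : t0 < y < x) by (unfold y; lra).
destruct (MVT_cor2 f f' y x ltac:(lra)) as [c [Hc1 Hc2]].
{ intros c Hc. apply Hder. lra. }
assert (Hfc : Rabs (f' c) <= e) by (apply Hder; lra).
specialize (Kl y ltac:(unfold y; lra)).
replace (f x - L) with ((f x - f y) + (f y - L)) by ring.
eapply Rle_trans; [apply Rabs_triang|]. rewrite Hc1, Rabs_mult.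
rewrite (Rabs_right (x - y)) by lra.
assert (Rabs (f' c) * (x - y) <= e * (x - t0)) by nra. lra.
Qed.

Lemma disk_open c rho z : in_disk c rho z -> exists d, 0 < d /\
  forall h k, Rabs h < d -> Rabs k < d -> in_disk c rho (fst z + h, snd z + k).
Proof.
unfold in_disk. destruct z as [s t]; simpl. intros Hin.
set (a := s - fst c). set (b := t - snd c). fold a b in Hin.
set (g := rho^2 - (a^2+b^2)).
set (M := 2*Rabs a + 2*Rabs b + 2).
assert (HM : 0 < M) by (unfold M; pose proof (Rabs_pos a); pose proof (Rabs_pos b); lra).
assert (Hg : 0 < g) by (unfold g; lra).
exists (Rmin 1 (g/M)). split. { apply Rmin_glb_lt; [lra| apply Rdiv_lt_0_compat; lra]. }
intros h k Hh Hk.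
assert (H1 : Rmin 1 (g/M) <= 1) by apply Rmin_l.
assert (H2 : Rmin 1 (g/M) <= g/M) by apply Rmin_r.
replace (s + h - fst c) with (a + h) by (unfold a; ring).
replace (t + k - snd c) with (b + k) by (unfold b; ring).
assert (Eh : (a+h)^2 <= a^2 + Rabs h * (2*Rabs a + 1)).
{ assert (h^2 = Rabs h ^2) by (rewrite pow2_abs; auto).
  assert (a*h <= Rabs a * Rabs h) by (rewrite <- Rabs_mult; apply Rle_abs).
  pose proof (Rabs_pos h). nra. }
assert (Ek : (b+k)^2 <= b^2 + Rabs k * (2*Rabs b + 1)).
{ assert (k^2 = Rabs k ^2) by (rewrite pow2_abs; auto).
  assert (b*k <= Rabs b * Rabs k) by (rewrite <- Rabs_mult; apply Rle_abs).
  pose proof (Rabs_pos k). nra. }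
assert (Rabs h * (2*Rabs a + 1) + Rabs k * (2*Rabs b+1) < g).
{ pose proof (Rabs_pos a). pose proof (Rabs_pos b). pose proof (Rabs_pos h). pose proof (Rabs_pos k).
  apply Rlt_le_trans with (g/M * M). 2: right; field; lra.
  assert (Rabs h < g/M) by lra. assert (Rabs k < g/M) by lra.
  assert (Rabs h * (2*Rabs a + 1) <= g/M * (2*Rabs a + 1)) by (apply Rmult_le_compat_r; lra).
  assert (Rabs k * (2*Rabs b + 1) < g/M * (2*Rabs b + 1)) by (apply Rmult_lt_compat_r; lra).
  assert (g/M * (2*Rabs a + 1) + g/M * (2*Rabs b + 1) = g/M*M) by (unfold M; ring). lra. }
unfold g in *. lra.
Qed.

Lemma partial_t f s t fs ft : diff2 f s t fs ft -> derivable_pt_lim (fun m => f s m) t ft.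
Proof.
intro D. assert (E: fs*0+ft*1 = ft) by ring. rewrite <- E.
eapply derivable_ext; [| apply (dir_deriv f s t s 0 0 1 t fs ft); [ring|ring|exact D]].
intro y; simpl; f_equal; ring.
Qed.

Lemma partial_s f s t fs ft : diff2 f s t fs ft -> derivable_pt_lim (fun m => f m t) s fs.
Proof.
intro D. assert (E: fs*1+ft*0 = fs) by ring. rewrite <- E.
eapply derivable_ext; [| apply (dir_deriv f s t 0 t 1 0 s fs ft); [ring|ring|exact D]].
intro y; simpl; f_equal; ring.
Qed.

Lemma Hsq_pos (w : SC) : w <> sc_zero -> 0 < fst w * fst w + snd w * snd w.
Proof.
destruct w as [a b]; simpl. intros Hn.
destruct (Req_dec a 0); destruct (Req_dec b 0); subst; try nra.
exfalso; apply Hn; reflexivity.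
Qed.

Lemma part2 c rho A A' H z0 psi : 0 < rho ->
  split_holomorphic (in_disk c rho) H ->
  (forall z, in_disk c rho z -> A' z = sc_mul (H z) (H z)) ->
  isolated_zero (in_disk c rho) H z0 ->
  is_psi (fun z => in_disk c rho z /\ z <> z0) A A' psi ->
  nonremovable_singularity (fun z => in_disk c rho z /\ z <> z0) psi z0.
Proof.
intros Hrho [H' HH'] HA' [Hz0 [HH0 [ri [Hri Hiso]]]] Hpsi
  [r [p0 [Om [u [Hr [HOm [[ux [uy [uxx [uxy [uyx [uyy Hh]]]]]] [HOm0 [Hu0 [Hcont Hgraph]]]]]]]]]].
destruct z0 as [s0 t0].
set (x0 := r1 p0). set (y0 := r2 p0).
destruct (Hh x0 y0 HOm0) as [_ [Dux _]].
destruct (diff2_lip _ _ _ _ _ Dux) as [du [Hdu Kux]].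
set (C := Rabs (uxx x0 y0) + Rabs (uxy x0 y0) + 1). fold C in Kux.
assert (HC : 0 < C) by (unfold C; pose proof (Rabs_pos (uxx x0 y0)); pose proof (Rabs_pos (uxy x0 y0)); lra).
set (e := 1/(4*C)).
assert (He : 0 < e) by (unfold e; apply Rdiv_lt_0_compat; lra).
destruct (HH' (s0,t0) Hz0) as [D1 D2]. simpl in D1, D2.
destruct (diff2_lip _ _ _ _ _ D1) as [d1 [Hd1 K1]].
destruct (diff2_lip _ _ _ _ _ D2) as [d2 [Hd2 K2]].
set (C1 := Rabs (fst (H' (s0, t0))) + Rabs (snd (H' (s0, t0))) + 1). fold C1 in K1.
set (C2 := Rabs (snd (H' (s0, t0))) + Rabs (fst (H' (s0, t0))) + 1). fold C2 in K2.
assert (HC1 : 0 < C1) by (unfold C1; pose proof (Rabs_pos (fst (H' (s0, t0)))); pose proof (Rabs_pos (snd (H' (s0, t0)))); lra).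
assert (HC2 : 0 < C2) by (unfold C2; pose proof (Rabs_pos (fst (H' (s0, t0)))); pose proof (Rabs_pos (snd (H' (s0, t0)))); lra).
set (dp := Rmin 1 (e / (C1*C1 + C2*C2))).
assert (Hdp : 0 < dp) by (unfold dp; apply Rmin_glb_lt; [lra| apply Rdiv_lt_0_compat; nra]).
destruct (disk_open c rho (s0,t0) Hz0) as [dd [Hdd Kdd]]. simpl in Kdd.
destruct (Hcont du Hdu) as [dc [Hdc Kc]].
set (D0 := Rmin (Rmin (Rmin d1 d2) (Rmin dp dd)) (Rmin (Rmin ri r) dc)).
assert (HD0 : 0 < D0). { unfold D0. repeat apply Rmin_glb_lt. all: try assumption. all: try lra. all: apply Rdiv_lt_0_compat; nra. }
assert (D0d1 : D0 <= d1) by (unfold D0; eapply Rle_trans; [apply Rmin_l|]; eapply Rle_trans; [apply Rmin_l|]; apply Rmin_l).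
assert (D0d2 : D0 <= d2) by (unfold D0; eapply Rle_trans; [apply Rmin_l|]; eapply Rle_trans; [apply Rmin_l|]; apply Rmin_r).
assert (D0dp : D0 <= dp) by (unfold D0; eapply Rle_trans; [apply Rmin_l|]; eapply Rle_trans; [apply Rmin_r|]; apply Rmin_l).
assert (D0dd : D0 <= dd) by (unfold D0; eapply Rle_trans; [apply Rmin_l|]; eapply Rle_trans; [apply Rmin_r|]; apply Rmin_r).
assert (D0ri : D0 <= ri) by (unfold D0; eapply Rle_trans; [apply Rmin_r|]; eapply Rle_trans; [apply Rmin_l|]; apply Rmin_l).
assert (D0r : D0 <= r) by (unfold D0; eapply Rle_trans; [apply Rmin_r|]; eapply Rle_trans; [apply Rmin_l|]; apply Rmin_r).
assert (D0dc : D0 <= dc) by (unfold D0; eapply Rle_trans; [apply Rmin_r|]; apply Rmin_r).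
assert (Hvd : forall x dl, 0 < x - t0 < dl -> in_disk (s0,t0) dl (s0,x)).
{ intros x dl Hx. unfold in_disk; simpl. nra. }
assert (HU : forall x, t0 < x < t0 + D0 -> in_disk c rho (s0,x) /\ (s0,x) <> (s0,t0)).
{ intros x Hx. split.
  - replace (s0,x) with (fst (s0,t0) + 0, snd (s0,t0) + (x - t0)) by (simpl; f_equal; ring).
    apply Kdd; rewrite ?Rabs_R0, ?Rabs_right; lra.
  - intro E; injection E; lra. }
set (P := fun x => fst (A' (s0,x))).
assert (HP : forall x, t0 < x < t0 + D0 -> 0 < P x /\ P x <= e).
{ intros x Hx. destruct (HU x Hx) as [Hin Hne]. unfold P. rewrite (HA' _ Hin). unfold sc_mul; simpl.
  split.
  - apply Hsq_pos. apply Hiso; auto. apply Hvd; lra.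
  - specialize (K1 0 (x - t0) ltac:(rewrite Rabs_R0; lra) ltac:(rewrite Rabs_right; lra)).
    specialize (K2 0 (x - t0) ltac:(rewrite Rabs_R0; lra) ltac:(rewrite Rabs_right; lra)).
    replace (s0+0) with s0 in K1, K2 by ring. replace (t0 + (x - t0)) with x in K1, K2 by ring.
    rewrite HH0 in K1, K2. unfold sc_zero in K1, K2; simpl in K1, K2.
    rewrite Rminus_0_r, Rabs_R0, Rplus_0_l, (Rabs_right (x - t0)) in K1, K2 by lra.
    set (h1 := fst (H (s0,x))) in *. set (h2 := snd (H (s0,x))) in *. set (k := x - t0) in *.
    assert (h1*h1 <= (C1*k)*(C1*k)). { assert (Rabs h1 * Rabs h1 <= (C1*k)*(C1*k)) by (pose proof (Rabs_pos h1); nra).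
      rewrite <- Rabs_mult in H0. pose proof (Rle_abs (h1*h1)). lra. }
    assert (h2*h2 <= (C2*k)*(C2*k)). { assert (Rabs h2 * Rabs h2 <= (C2*k)*(C2*k)) by (pose proof (Rabs_pos h2); nra).
      rewrite <- Rabs_mult in H1. pose proof (Rle_abs (h2*h2)). lra. }
    assert (Hk1 : k <= 1) by (assert (dp <= 1) by apply Rmin_l; unfold k; lra).
    assert (Hk2 : k <= e / (C1*C1+C2*C2)) by (assert (dp <= e / (C1*C1+C2*C2)) by apply Rmin_r; unfold k; lra).
    assert ((C1*C1+C2*C2) * k <= e).
    { apply Rle_trans with ((C1*C1+C2*C2) * (e / (C1*C1+C2*C2))). apply Rmult_le_compat_l; nra. right; field; nra. }
    assert (0 < k) by (unfold k; lra). nra. }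
assert (Hlim : forall eta, 0 < eta -> exists dl, 0 < dl /\ forall x, t0 < x < t0 + dl ->
   Rabs (r1 (psi (s0,x)) - r1 p0) < eta /\ Rabs (r2 (psi (s0,x)) - r2 p0) < eta).
{ intros eta Heta. destruct (Hcont eta Heta) as [dl [Hdl Kl]]. exists (Rmin dl D0). split. apply Rmin_glb_lt; auto.
  intros x Hx. assert (Rmin dl D0 <= dl) by apply Rmin_l. assert (Rmin dl D0 <= D0) by apply Rmin_r.
  destruct (Kl (s0,x)) as [Ka [Kb _]]; auto. apply HU; lra. apply Hvd; lra. }
assert (HY : forall x, t0 < x < t0 + D0 -> r2 (psi (s0,x)) = y0).
{ intros x Hx.
  assert (B := side_bound (fun x => r2 (psi (s0,x))) (fun _ => 0) t0 D0 0 y0 HD0 (Rle_refl 0)).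
  assert (Rabs (r2 (psi (s0, x)) - y0) <= 0 * (x - t0)).
  { apply B; auto.
    - intros y Hy. split; [|rewrite Rabs_R0; lra].
      destruct (Hpsi (s0,y) (HU y Hy)) as [_ [E2 _]]. simpl in E2.
      destruct (omega_vals A A' (s0,y)) as [_ [_ [_ [_ [O5 _]]]]]. rewrite O5 in E2.
      exact (partial_t _ _ _ _ _ E2).
    - intros eta Heta. destruct (Hlim eta Heta) as [dl [Hdl Kl]]. exists dl; split; auto.
      intros y Hy. apply Kl; auto. }
  rewrite Rmult_0_l in H0. pose proof (Rabs_pos (r2 (psi (s0, x)) - y0)).
  assert (Rabs (r2 (psi (s0, x)) - y0) = 0) by lra.
  pose proof (Rle_abs (r2 (psi (s0, x)) - y0)). pose proof (Rle_abs (-(r2 (psi (s0, x)) - y0))).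
  rewrite Rabs_Ropp in H4. lra. }
assert (HX : forall x, t0 < x < t0 + D0 -> Rabs (r1 (psi (s0,x)) - x0) <= e * (x - t0)).
{ intros x Hx.
  apply (side_bound (fun x => r1 (psi (s0,x))) P t0 D0 e x0 HD0 (Rlt_le _ _ He)); auto.
  - intros y Hy. split.
    + destruct (Hpsi (s0,y) (HU y Hy)) as [E1 _]. simpl in E1.
      destruct (omega_vals A A' (s0,y)) as [_ [_ [_ [O4 _]]]]. rewrite O4 in E1.
      exact (partial_t _ _ _ _ _ E1).
    + destruct (HP y Hy). rewrite Rabs_right; lra.
  - intros eta Heta. destruct (Hlim eta Heta) as [dl [Hdl Kl]]. exists dl; split; auto.
    intros y Hy. apply Kl; auto. }
assert (HG : forall x, t0 < x < t0 + D0 -> ux (r1 (psi (s0,x))) y0 = - x).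
{ intros x Hx.
  destruct (Hgraph (s0,x) (HU x Hx) ltac:(apply Hvd; lra)) as [HOmx _].
  rewrite (HY x Hx) in HOmx.
  destruct (Hh _ _ HOmx) as [Du _].
  assert (G1 := partial_s _ _ _ _ _ Du).
  destruct (Hpsi (s0,x) (HU x Hx)) as [E1 [_ E3]]. cbn [fst snd] in E1, E3.
  destruct (omega_vals A A' (s0,x)) as [_ [_ [_ [O4 [_ O6]]]]]. rewrite O4 in E1. rewrite O6 in E3.
  assert (X1 := partial_t _ _ _ _ _ E1).
  assert (X3 := partial_t _ _ _ _ _ E3).
  assert (Cmp := derivable_pt_lim_comp _ _ _ _ _ X1 G1).
  assert (Cmp' : derivable_pt_lim (fun m => r3 (psi (s0, m))) x
                  (ux (r1 (psi (s0, x))) y0 * fst (A' (s0, x)))).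
  { apply (derivable_ext_loc (comp (fun m => u m y0) (fun m => r1 (psi (s0,m)))) _ x _ (Rmin (x - t0) (t0 + D0 - x))); [apply Rmin_glb_lt; lra| |exact Cmp].
    intros y Hy. assert (Rmin (x - t0) (t0 + D0 - x) <= x - t0) by apply Rmin_l.
    assert (Rmin (x - t0) (t0 + D0 - x) <= t0 + D0 - x) by apply Rmin_r.
    assert (Hy' : t0 < y < t0 + D0) by (apply Rabs_def2 in Hy; lra).
    destruct (Hgraph (s0,y) (HU y Hy') ltac:(apply Hvd; lra)) as [_ Eq].
    rewrite (HY y Hy') in Eq. unfold comp. simpl. rewrite Eq. reflexivity. }
  assert (Eu := uniqueness_limite _ _ _ _ X3 Cmp').
  destruct (HP x Hx) as [Pp _]. unfold P in Pp. simpl in Eu.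
  apply Rmult_eq_reg_r with (fst (A' (s0, x))); lra. }
set (a1 := t0 + D0/2). set (a2 := t0 + D0/4).
assert (Ha1 : t0 < a1 < t0 + D0) by (unfold a1; lra).
assert (Ha2 : t0 < a2 < t0 + D0) by (unfold a2; lra).
assert (L : forall x, t0 < x < t0 + D0 -> Rabs (ux (r1 (psi (s0,x))) y0 - ux x0 y0) <= C * (e * (x - t0))).
{ intros x Hx.
  destruct (Kc (s0,x) (HU x Hx) ltac:(apply Hvd; lra)) as [Kx _].
  specialize (Kux (r1 (psi (s0,x)) - x0) 0 Kx ltac:(rewrite Rabs_R0; lra)).
  replace (x0 + (r1 (psi (s0, x)) - x0)) with (r1 (psi (s0, x))) in Kux by ring.
  rewrite Rplus_0_r, Rabs_R0, Rplus_0_r in Kux.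
  eapply Rle_trans; [exact Kux|]. apply Rmult_le_compat_l; [lra|]. apply HX; auto. }
pose proof (L a1 Ha1) as L1. pose proof (L a2 Ha2) as L2.
rewrite (HG a1 Ha1) in L1. rewrite (HG a2 Ha2) in L2.
assert (Ce : C * e = 1/4) by (unfold e; field; lra).
rewrite <- Rmult_assoc, Ce in L1, L2.
pose proof (Rle_abs (- a1 - ux x0 y0)). pose proof (Rle_abs (-(- a1 - ux x0 y0))).
pose proof (Rle_abs (- a2 - ux x0 y0)). pose proof (Rle_abs (-(- a2 - ux x0 y0))).
rewrite Rabs_Ropp in H1, H3. unfold a1, a2 in *. lra.
Qed.

Lemma antideriv (phi : R -> R) a w : 0 < w ->
  (forall u, a - w < u < a + w -> continuity_pt phi u) ->
  forall u, a - w < u < a + w -> derivable_pt_lim (fun x => RInt phi a x) u (phi u).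
Proof.
intros Hw Hc u Hu. apply is_derive_Reals.
apply (is_derive_RInt phi (fun x => RInt phi a x) a u).
- assert (He : 0 < Rmin (u - (a - w)) (a + w - u)) by (apply Rmin_glb_lt; lra).
  exists (mkposreal _ He). intros y Hy.
  change (Rabs (y - u) < Rmin (u - (a - w)) (a + w - u)) in Hy.
  assert (Rmin (u - (a - w)) (a + w - u) <= u - (a-w)) by apply Rmin_l.
  assert (Rmin (u - (a - w)) (a + w - u) <= a + w - u) by apply Rmin_r.
  apply Rabs_def2 in Hy.
  apply (@RInt_correct R_CompleteNormedModule). apply (@ex_RInt_continuous R_CompleteNormedModule). intros z Hz.
  apply continuity_pt_filterlim. apply Hc.
  assert (Rmin a y <= z <= Rmax a y) by exact Hz.
  unfold Rmin, Rmax in H1. destruct (Rle_dec a y); lra.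
- apply continuity_pt_filterlim. apply Hc; auto.
Qed.

Lemma const_line f s t al be : 
  (forall m, 0 <= m <= 1 -> exists fs ft, diff2 f (s + m*al) (t + m*be) fs ft /\ fs*al + ft*be = 0) ->
  f (s + al) (t + be) = f s t.
Proof.
intros Hd.
destruct (MVT_cor2 (fun m => f (s + m*al) (t + m*be)) (fun _ => 0) 0 1 ltac:(lra)) as [c [Hc _]].
- intros m Hm. destruct (Hd m Hm) as [fs [ft [D E]]]. rewrite <- E.
  apply (dir_deriv f (s + m*al) (t + m*be)); auto.
- replace (s + al) with (s + 1*al) by ring. replace (t + be) with (t + 1*be) by ring.
  replace s with (s + 0*al) at 2 by ring. replace t with (t + 0*be) at 2 by ring. lra.
Qed.

Definition f1 (A : SC -> SC) s t := fst (A (s,t)) + snd (A (s,t)).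
Definition g1 (A : SC -> SC) s t := fst (A (s,t)) + -1 * snd (A (s,t)).
Definition phi1 A (c:SC) u := f1 A (fst c + (u - fst c - snd c)/2) (snd c + (u - fst c - snd c)/2).
Definition phi2 A (c:SC) v := g1 A (fst c + (v - fst c + snd c)/2) (snd c - (v - fst c + snd c)/2).
Definition Gp A c s t := /2 * RInt (phi1 A c) (fst c + snd c) (1*s+1*t) + /2 * RInt (phi2 A c) (fst c - snd c) (1*s + -1*t).
Definition psi0 A c (z : SC) : R3 := (snd (A z), - fst z, - snd z * snd (A z) + Gp A c (fst z) (snd z)).

Section P1.
Variables (c : SC) (rho : R) (A A' : SC -> SC).
Hypothesis Hrho : 0 < rho.
Hypothesis HA : split_holo_deriv (in_disk c rho) A A'.

Lemma f1_diff s t : in_disk c rho (s,t) ->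
  diff2 (f1 A) s t (fst (A' (s,t)) + snd (A' (s,t))) (snd (A' (s,t)) + fst (A' (s,t))).
Proof. intros Hin. destruct (HA _ Hin) as [D1 D2]. simpl in D1, D2. exact (diff2_plus _ _ _ _ _ _ _ _ D1 D2). Qed.

Lemma g1_diff s t : in_disk c rho (s,t) ->
  diff2 (g1 A) s t (fst (A' (s,t)) + -1 * snd (A' (s,t))) (snd (A' (s,t)) + -1 * fst (A' (s,t))).
Proof. intros Hin. destruct (HA _ Hin) as [D1 D2]. simpl in D1, D2.
exact (diff2_plus _ _ _ _ _ _ _ _ D1 (diff2_scal (-1) _ _ _ _ _ D2)). Qed.

Lemma f1_line s t : in_disk c rho (s,t) -> f1 A s t = phi1 A c (s+t).
Proof.
intros Hin. unfold phi1. set (c1 := fst c) in *. set (c2 := snd c) in *.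
set (al := (c1 - s + t - c2)/2).
replace (c1 + (s + t - c1 - c2) / 2) with (s + al) by (unfold al; field).
replace (c2 + (s + t - c1 - c2) / 2) with (t + -al) by (unfold al; field).
symmetry. apply const_line. intros m Hm.
assert (Hin' : in_disk c rho (s + m*al, t + m * -al)).
{ unfold in_disk in *; simpl in *. fold c1 c2 in Hin |- *. unfold al.
  assert (0 <= ((s - c1) - (t - c2))^2 * (m * (1 - m/2))) by (apply Rmult_le_pos; [apply pow2_ge_0| nra]).
  nra. }
exists (fst (A' (s + m * al, t + m * - al)) + snd (A' (s + m * al, t + m * - al))),
       (snd (A' (s + m * al, t + m * - al)) + fst (A' (s + m * al, t + m * - al))).
split. apply f1_diff; auto. ring.
Qed.

Lemma g1_line s t : in_disk c rho (s,t) -> g1 A s t = phi2 A c (s-t).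
Proof.
intros Hin. unfold phi2. set (c1 := fst c) in *. set (c2 := snd c) in *.
set (al := (c1 - s - t + c2)/2).
replace (c1 + (s - t - c1 + c2) / 2) with (s + al) by (unfold al; field).
replace (c2 - (s - t - c1 + c2) / 2) with (t + al) by (unfold al; field).
symmetry. apply const_line. intros m Hm.
assert (Hin' : in_disk c rho (s + m*al, t + m * al)).
{ unfold in_disk in *; simpl in *. fold c1 c2 in Hin |- *. unfold al.
  assert (0 <= ((s - c1) + (t - c2))^2 * (m * (1 - m/2))) by (apply Rmult_le_pos; [apply pow2_ge_0| nra]).
  nra. }
exists (fst (A' (s + m * al, t + m * al)) + -1 * snd (A' (s + m * al, t + m * al))),
       (snd (A' (s + m * al, t + m * al)) + -1 * fst (A' (s + m * al, t + m * al))).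
split. apply g1_diff; auto. ring.
Qed.


Lemma sqrt2_sq : sqrt 2 * sqrt 2 = 2.
Proof. apply sqrt_sqrt. lra. Qed.

Lemma in_band a w u : w = rho * sqrt 2 -> (a - w < u < a + w <-> (u - a)^2 < 2 * rho^2).
Proof.
intros Hw. pose proof sqrt2_sq. assert (0 < sqrt 2) by (apply sqrt_lt_R0; lra).
assert (0 < w) by (rewrite Hw; nra).
assert (w*w = 2*rho^2) by (rewrite Hw; nra).
split; intros; nra.
Qed.

Lemma phi1_cont u : (u - fst c - snd c)^2 < 2*rho^2 -> continuity_pt (phi1 A c) u.
Proof.
intros Hu. set (c1 := fst c). set (c2 := snd c). fold c1 c2 in Hu.
assert (Hin : in_disk c rho (c1 + (u - c1 - c2)/2, c2 + (u - c1 - c2)/2)).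
{ unfold in_disk; simpl. fold c1 c2. nra. }
assert (D := dir_deriv (f1 A) (c1 + (u - c1 - c2)/2) (c2 + (u - c1 - c2)/2) (c1 - (c1+c2)/2) (c2 - (c1+c2)/2) (1/2) (1/2) u _ _
   ltac:(field) ltac:(field) (f1_diff _ _ Hin)).
apply derivable_continuous_pt. eexists. eapply derivable_ext; [|exact D].
intro y. unfold phi1. fold c1 c2. f_equal; field.
Qed.

Lemma phi2_cont v : (v - fst c + snd c)^2 < 2*rho^2 -> continuity_pt (phi2 A c) v.
Proof.
intros Hu. set (c1 := fst c). set (c2 := snd c). fold c1 c2 in Hu.
assert (Hin : in_disk c rho (c1 + (v - c1 + c2)/2, c2 - (v - c1 + c2)/2)).
{ unfold in_disk; simpl. fold c1 c2. nra. }
assert (D := dir_deriv (g1 A) (c1 + (v - c1 + c2)/2) (c2 - (v - c1 + c2)/2) (c1 - (c1-c2)/2) (c2 + (c1-c2)/2) (1/2) (-1/2) v _ _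
   ltac:(field) ltac:(field) (g1_diff _ _ Hin)).
apply derivable_continuous_pt. eexists. eapply derivable_ext; [|exact D].
intro y. unfold phi2. fold c1 c2. f_equal; field.
Qed.

Lemma psi0_ok : is_psi (in_disk c rho) A A' (psi0 A c).
Proof.
intros z Hz. destruct z as [s t].
destruct (omega_vals A A' (s,t)) as [O1 [O2 [O3 [O4 [O5 O6]]]]].
rewrite O1, O2, O3, O4, O5, O6. cbn [fst snd].
destruct (HA _ Hz) as [Da Db]. cbn [fst snd] in Da, Db.
set (c1 := fst c) in *. set (c2 := snd c) in *.
assert (Hw := in_band).
split; [|split].
- exact Db.
- intros eps He. exists 1. split; [lra|]. intros h k _ _.
  unfold psi0, r2; cbn [fst snd].
  replace (- (s + h) - - s - -1 * h - 0 * k) with 0 by ring. rewrite Rabs_R0.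
  pose proof (Rabs_pos h); pose proof (Rabs_pos k); nra.
- unfold psi0, r3; cbn [fst snd].
  assert (Hu : c1 + c2 - rho * sqrt 2 < 1*s+1*t < c1 + c2 + rho * sqrt 2).
  { apply (in_band (c1+c2) (rho * sqrt 2) (1*s+1*t) eq_refl). unfold in_disk in Hz; simpl in Hz. fold c1 c2 in Hz.
    pose proof (pow2_ge_0 ((s-c1)-(t-c2))). nra. }
  assert (Hv : c1 - c2 - rho * sqrt 2 < 1*s + -1*t < c1 - c2 + rho * sqrt 2).
  { apply (in_band (c1-c2) (rho * sqrt 2) (1*s + -1*t) eq_refl). unfold in_disk in Hz; simpl in Hz. fold c1 c2 in Hz.
    pose proof (pow2_ge_0 ((s-c1)+(t-c2))). nra. }
  assert (Hrs : 0 < rho * sqrt 2) by (apply Rmult_lt_0_compat; auto; apply sqrt_lt_R0; lra).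
  assert (P1 := antideriv (phi1 A c) (c1+c2) (rho*sqrt 2) Hrs
     ltac:(intros u Hu'; apply phi1_cont; apply (in_band (c1+c2) (rho*sqrt 2) u eq_refl) in Hu'; fold c1 c2; nra)
     (1*s+1*t) Hu).
  assert (P2 := antideriv (phi2 A c) (c1-c2) (rho*sqrt 2) Hrs
     ltac:(intros u Hu'; apply phi2_cont; apply (in_band (c1-c2) (rho*sqrt 2) u eq_refl) in Hu'; fold c1 c2; nra)
     (1*s + -1*t) Hv).
  assert (G1 := diff2_scal (/2) _ _ _ _ _ (diff2_of_1d _ 1 1 s t _ P1)).
  assert (G2 := diff2_scal (/2) _ _ _ _ _ (diff2_of_1d _ 1 (-1) s t _ P2)).
  assert (G := diff2_plus _ _ _ _ _ _ _ _ G1 G2).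
  assert (M := diff2_mult_negt _ _ _ _ _ Db).
  assert (T := diff2_plus _ _ _ _ _ _ _ _ M G).
  assert (E1 : phi1 A c (1*s+1*t) = fst (A (s,t)) + snd (A (s,t))).
  { replace (1*s+1*t) with (s+t) by ring. rewrite <- (f1_line s t Hz). reflexivity. }
  assert (E2 : phi2 A c (1*s + -1*t) = fst (A (s,t)) + -1 * snd (A (s,t))).
  { replace (1*s + -1*t) with (s-t) by ring. rewrite <- (g1_line s t Hz). reflexivity. }
  rewrite E1, E2 in T.
  eapply diff2_eqv; [| | exact T]; field.
Qed.

End P1.

Theorem mainTheorem5 (c : SC) (rho : R) (A A' H : SC -> SC) (z0 : SC) :
  0 < rho ->
  split_holo_deriv (in_disk c rho) A A' ->
  split_holomorphic (in_disk c rho) H ->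
  (forall z, in_disk c rho z -> A' z = sc_mul (H z) (H z)) ->
  isolated_zero (in_disk c rho) H z0 ->
  (exists psi, is_psi (fun z => in_disk c rho z /\ z <> z0) A A' psi) /\
  (forall psi, is_psi (fun z => in_disk c rho z /\ z <> z0) A A' psi ->
     nonremovable_singularity (fun z => in_disk c rho z /\ z <> z0) psi z0).
Proof.
intros Hrho HA HH HA' Hiso. split.
- exists (psi0 A c). intros z [Hz _]. eapply psi0_ok; eauto.
- intros psi Hpsi. eapply part2; eauto.
Qed.
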